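(* Let $\rho\in(0,1)$, $\alpha\ge0$, $k>2$ an integer, and define for $C\ge1$ the function $\hat\rho(C)=\tilde\rho(C)+3\alpha kC$. Let $C_0=\frac{2+\rho^k}{2-\rho^k}$. Then: (i) if $\alpha<\frac{\rho^k(1-\rho^k)}{3k(2+\rho^k)}=:\alpha_0$, there exists a nonempty interval $I$ containing $C_0$ such that $\hat\rho(C)<\rho^k$ for all $C\in I$; (ii) if $\alpha<\min\big(\frac{\rho^k(1-\rho^k)}{3k(2+\rho^k)},\frac{\rho^k-\rho_1}{3kC_1}\big)$, then $\hat\rho(C)<\rho^k$ for all $C\in[C_0,C_1]$; (iii) if $\alpha<\min\big(\frac{\rho^k(1-\rho^k)}{3k(2+\rho^k)},\frac{\rho^k-\rho_*}{3kC_*}\big)$, then $\hat\rho(C)<\rho^k$ for all $C\in[C_0,C_*]$.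
   Context: $\mathbb{R}_k[X]$ denotes real polynomials of degree at most $k$; $\|p\|_1$ is the sum of absolute values of coefficients of $p$. $\tilde\rho(C)=\min\{\max_{x\in[0,\rho]}|p(x)|:p\in\mathbb{R}_k[X],\ p(1)=1,\ \|p\|_1\le C\}$. (The quantity $\hat\rho(C)$ is the linear convergence factor guaranteed for one pass of Constrained Anderson Acceleration applied to a $\rho$-Lipschitz map $F=G+\xi$ with $0\preccurlyeq G\preccurlyeq\rho I$ symmetric and $\xi$ $\alpha$-Lipschitz.) $T_k$ is the first-kind Chebyshev polynomial of degree $k$; $C_*=\|p_*\|_1$ with $p_*(X)=T_k(\frac{2X-\rho}{\rho})/|T_k(\frac{2-\rho}{\rho})|$; $\rho_*=\frac{2\beta^k}{1+\beta^{2k}}$ with $\beta=\frac{1-\sqrt{1-\rho}}{1+\sqrt{1-\rho}}$; $\beta_\rho=\frac{\sqrt{1+\rho}-\sqrt{1-\rho}}{\sqrt{1+\rho}+\sqrt{1-\rho}}$, $\rho_1=\frac{2\beta_\rho^k}{1+\beta_\rho^{2k}}$, $C_1=\frac{\rho_1}{2\rho^k}\big((1-\sqrt{1+\rho^2})^k+(1+\sqrt{1+\rho^2})^k\big)$. *)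

(* Defs.v *)
From HB Require Import structures.
From mathcomp Require Import all_boot all_order all_algebra.
From mathcomp Require Import boolp classical_sets reals.
Set Implicit Arguments. Unset Strict Implicit. Unset Printing Implicit Defensive.
Import Order.TTheory GRing.Theory Num.Theory.
Local Open Scope classical_set_scope.
Local Open Scope ring_scope.

Section Defs.
Variable R : realType.

Definition l1norm (p : {poly R}) : R := \sum_(i < size p) `|p`_i|.

Definition supnorm_on (rho : R) (p : {poly R}) : R :=
  sup [set `|p.[x]| | x in [set x : R | 0 <= x <= rho]].

Definition rho_tilde (rho : R) (k : nat) (C : R) : R :=
  inf [set supnorm_on rho p | p in
        [set p : {poly R} | (size p <= k.+1)%N /\ p.[1] = 1 /\ l1norm p <= C]].

Definition rho_hat (rho alpha : R) (k : nat) (C : R) : R :=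
  rho_tilde rho k C + 3 * alpha * k%:R * C.

Fixpoint cheb (n : nat) : {poly R} :=
  match n with
  | 0 => 1
  | 1 => 'X
  | (m.+1 as n').+1 => 2%:P * 'X * cheb n' - cheb m
  end.

Definition p_star (rho : R) (k : nat) : {poly R} :=
  (`|(cheb k).[(2 - rho) / rho]|)^-1 *: (cheb k \Po ((2 / rho) *: 'X - 1)).

Definition C_star (rho : R) (k : nat) : R := l1norm (p_star rho k).

Definition beta (rho : R) : R :=
  (1 - Num.sqrt (1 - rho)) / (1 + Num.sqrt (1 - rho)).

Definition rho_star (rho : R) (k : nat) : R :=
  2 * beta rho ^+ k / (1 + beta rho ^+ (2 * k)).

Definition beta_rho (rho : R) : R :=
  (Num.sqrt (1 + rho) - Num.sqrt (1 - rho)) / (Num.sqrt (1 + rho) + Num.sqrt (1 - rho)).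

Definition rho_1 (rho : R) (k : nat) : R :=
  2 * beta_rho rho ^+ k / (1 + beta_rho rho ^+ (2 * k)).

Definition C_1 (rho : R) (k : nat) : R :=
  rho_1 rho k / (2 * rho ^+ k) *
  ((1 - Num.sqrt (1 + rho ^+ 2)) ^+ k + (1 + Num.sqrt (1 + rho ^+ 2)) ^+ k).

Definition C_0 (rho : R) (k : nat) : R := (2 + rho ^+ k) / (2 - rho ^+ k).

Definition alpha_0 (rho : R) (k : nat) : R :=
  rho ^+ k * (1 - rho ^+ k) / (3 * k%:R * (2 + rho ^+ k)).

End Defs.

(* Main.v *)
Require Import Defs.
From HB Require Import structures.
From mathcomp Require Import all_boot all_order all_algebra.
From mathcomp Require Import boolp classical_sets reals.
From mathcomp Require Import ring lra zify.
Import Order.TTheory GRing.Theory Num.Theory.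
Local Open Scope ring_scope.

Section Helpers.
Local Open Scope classical_set_scope.
Set Implicit Arguments. Unset Strict Implicit.
Lemma supnorm_ge0 (R : realType) (rho : R) (p : {poly R}) :
  0 <= rho -> 0 <= supnorm_on rho p.
Proof.
move=> r0; rewrite /supnorm_on.
set S := [set _ | _ in _].
case: (pselect (has_sup S)) => [hs|hs]; last by rewrite sup_out.
apply: le_trans (normr_ge0 p.[0]) _.
apply: (ub_le_sup hs.2); exists 0 => //=; by rewrite lexx r0.
Qed.

Lemma supnorm_le (R : realType) (rho : R) (p : {poly R}) (M : R) :
  0 <= rho -> (forall x : R, 0 <= x <= rho -> `|p.[x]| <= M) -> supnorm_on rho p <= M.
Proof.
move=> r0 H; apply: ge_sup.
  by exists `|p.[0]|; exists 0 => //=; rewrite lexx r0.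
by move=> _ [x /= hx <-]; apply: H.
Qed.

Lemma rho_tilde_le (R : realType) (rho : R) k C (p : {poly R}) :
  0 <= rho -> (size p <= k.+1)%N -> p.[1] = 1 -> l1norm p <= C ->
  rho_tilde rho k C <= supnorm_on rho p.
Proof.
move=> r0 sp p1 lp; rewrite /rho_tilde.
apply: ge_inf.
  by exists 0 => _ [q _ <-]; apply: supnorm_ge0.
by exists p.
Qed.

Lemma l1normE (R : realType) (p : {poly R}) n : (size p <= n)%N ->
  l1norm p = \sum_(i < n) `|p`_i|.
Proof.
move=> sp; rewrite /l1norm -!(big_mkord xpredT (fun i => `|p`_i|)).
rewrite (big_cat_nat (leq0n (size p)) sp) /= [X in _ + X]big1_seq ?addr0 //.
move=> i /andP[_]; rewrite mem_index_iota => /andP[hi _].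
by rewrite nth_default // normr0.
Qed.

Lemma key (R : realType) (rho alpha : R) k (p0 p1 : {poly R}) (c0 c1 m0 m1 C : R) :
  0 <= rho -> (size p0 <= k.+1)%N -> (size p1 <= k.+1)%N ->
  p0.[1] = 1 -> p1.[1] = 1 ->
  l1norm p0 <= c0 -> l1norm p1 <= c1 ->
  (forall x : R, 0 <= x <= rho -> `|p0.[x]| <= m0) ->
  (forall x : R, 0 <= x <= rho -> `|p1.[x]| <= m1) ->
  m0 + 3 * alpha * k%:R * c0 < rho ^+ k ->
  m1 + 3 * alpha * k%:R * c1 < rho ^+ k ->
  c0 <= C <= c1 -> rho_hat rho alpha k C < rho ^+ k.
Proof.
move=> r0 s0 s1 e0 e1 l0 l1 b0 b1 h0 h1 /andP[Cl Cr].
have [t /andP[t0 t1] Ct] : exists2 t : R, 0 <= t <= 1 & C = t * c0 + (1 - t) * c1.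
  have [e|ne] := eqVneq c0 c1.
    exists 1; first by rewrite ler01 lexx.
    by apply/le_anti; rewrite -e in Cr; rewrite mul1r subrr mul0r addr0 Cl Cr.
  have lt : c0 < c1 by rewrite lt_neqAle ne (le_trans Cl Cr).
  have d0 : 0 < c1 - c0 by rewrite subr_gt0.
  exists ((c1 - C) / (c1 - c0)).
    have h : (c1 - C) / (c1 - c0) <= 1.
      by rewrite ler_pdivrMr // mul1r lerD2l lerN2.
    by rewrite h divr_ge0 // subr_ge0 ?Cr ?(ltW lt).
  by field; rewrite subr_eq0 eq_sym.
pose p := t *: p0 + (1 - t) *: p1.
have t1' : 0 <= 1 - t by rewrite subr_ge0.
have sp : (size p <= k.+1)%N.
  apply: leq_trans (size_polyD _ _) _; rewrite geq_max.
  by rewrite !(leq_trans (size_scale_leq _ _)).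
have ep : p.[1] = 1 by rewrite /p !hornerE e0 e1; ring.
have lp : l1norm p <= C.
  rewrite (l1normE sp) Ct.
  apply: le_trans (_ : t * l1norm p0 + (1 - t) * l1norm p1 <= _); last first.
    by rewrite lerD // ler_wpM2l.
  rewrite (l1normE s0) (l1normE s1) !mulr_sumr -big_split /=.
  apply: ler_sum => i _; rewrite /p coefD !coefZ.
  by apply: le_trans (ler_normD _ _) _; rewrite !normrM (ger0_norm t0) (ger0_norm t1').
have bp : forall x, 0 <= x <= rho -> `|p.[x]| <= t * m0 + (1 - t) * m1.
  move=> x hx; rewrite /p !hornerE.
  apply: le_trans (ler_normD _ _) _; rewrite !normrM (ger0_norm t0) (ger0_norm t1').
  by rewrite lerD // ler_wpM2l // ?b0 ?b1.
rewrite /rho_hat.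
apply: le_lt_trans (_ : t * m0 + (1 - t) * m1 + 3 * alpha * k%:R * C < _).
  rewrite lerD2r; apply: le_trans (rho_tilde_le r0 sp ep lp) _.
  exact: supnorm_le.
rewrite Ct.
have -> : t * m0 + (1 - t) * m1 + 3 * alpha * k%:R * (t * c0 + (1 - t) * c1)
   = t * (m0 + 3 * alpha * k%:R * c0) + (1 - t) * (m1 + 3 * alpha * k%:R * c1) by ring.
set a := m0 + _ in h0 *; set b := m1 + _ in h1 *.
have [ab|ba] := leP a b.
  have : t * a <= t * b by rewrite ler_wpM2l.
  lra.
have : (1 - t) * b <= (1 - t) * a by rewrite ler_wpM2l // ltW.
lra.
Qed.

Definition p0poly (R : realType) (rho : R) (k : nat) : {poly R} :=
  (1 - rho ^+ k / 2)^-1 *: ('X^k - (rho ^+ k / 2)%:P).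

Lemma p0_props (R : realType) (rho : R) (k : nat) :
  0 < rho < 1 -> (0 < k)%N ->
  [/\ (size (p0poly rho k) <= k.+1)%N, (p0poly rho k).[1] = 1,
      l1norm (p0poly rho k) = C_0 rho k &
      forall x : R, 0 <= x <= rho -> `|(p0poly rho k).[x]| <= rho ^+ k / (2 - rho ^+ k)].
Proof.
move=> /andP[r0 r1]; case: k => // k' _.
have rk0 : 0 < rho ^+ k'.+1 by rewrite exprn_gt0.
have rk1 : rho ^+ k'.+1 < 1 by rewrite exprn_ilt1 ?ltW.
rewrite /p0poly /C_0.
set r := rho ^+ k'.+1 in rk0 rk1 *.
have c1 : 0 < 1 - r / 2 by lra.
have sp : (size ((1 - r / 2)^-1 *: ('X^(k'.+1) - (r / 2)%:P)) <= k'.+2)%N.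
  by apply: leq_trans (size_scale_leq _ _) _; rewrite size_XnsubC.
split => //.
- by rewrite !hornerE expr1n mulVf // (gt_eqF c1).
- rewrite (l1normE sp).
  rewrite big_ord_recr big_ord_recl /= big1 => [|i _].
    rewrite !coefZ !coefB !coefXn !coefC /= eqxx subr0 sub0r mulr1.
    rewrite !normrM normrN !ger0_norm ?invr_ge0 ?ltW //; last lra.
    field; lra.
  rewrite !coefZ !coefB !coefXn !coefC /=.
  have -> : (bump 0 i == k'.+1) = false.
    by apply/negbTE; rewrite /bump /= neq_ltn add1n ltnS ltn_ord.
  by rewrite subr0 mulr0 normr0.
- move=> x /andP[x0 xr].
  have xk : x ^+ k'.+1 <= r by apply: lerXn2r; rewrite // nnegrE ltW.
  have xk0 : 0 <= x ^+ k'.+1 by rewrite exprn_ge0.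
  rewrite !hornerE normrM ger0_norm; last by rewrite invr_ge0 ltW.
  have h : `|x ^+ k'.+1 - r / 2| <= r / 2 by rewrite ler_norml; lra.
  apply: le_trans (ler_wpM2l _ h) _; first by rewrite invr_ge0 ltW.
  have -> : (1 - r / 2)^-1 * (r / 2) = r / (2 - r) by field; lra.
  by [].
Qed.

Lemma m0_ok (R : realType) (rho alpha : R) (k : nat) :
  0 < rho < 1 -> 0 <= alpha -> (0 < k)%N -> alpha < alpha_0 rho k ->
  rho ^+ k / (2 - rho ^+ k) + 3 * alpha * k%:R * C_0 rho k < rho ^+ k.
Proof.
move=> /andP[r0 r1] a0 k0; rewrite /alpha_0 /C_0.
have rk0 : 0 < rho ^+ k by rewrite exprn_gt0.
have rk1 : rho ^+ k < 1 by rewrite exprn_ilt1 ?ltW // -lt0n.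
have kp : 0 < k%:R :> R by rewrite ltr0n.
set r := rho ^+ k in rk0 rk1 *.
set K := 3 * alpha * k%:R.
have d : 0 < 3 * k%:R * (2 + r) by rewrite mulr_gt0 // ?mulr_gt0 //; lra.
rewrite ltr_pdivlMr // => h.
have hK : K * (2 + r) < r * (1 - r) by rewrite /K; lra.
have -> : r / (2 - r) + K * ((2 + r) / (2 - r)) = (r + K * (2 + r)) / (2 - r).
  by field; lra.
rewrite ltr_pdivrMr; last lra.
nra.
Qed.

Lemma part1 (R : realType) (rho alpha : R) (k : nat) :
  0 < rho < 1 -> 0 <= alpha -> (2 < k)%N ->
   alpha < alpha_0 rho k ->
     exists a b : R, [/\ 1 <= a, a < b, a <= C_0 rho k <= b &
       forall C, a <= C <= b -> rho_hat rho alpha k C < rho ^+ k].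
Proof.
move=> hr a0 k2 ha.
have k0 : (0 < k)%N by apply: leq_trans k2.
have [s0 e0 l0 b0] := p0_props hr k0.
have m0 := m0_ok hr a0 k0 ha.
case/andP: (hr) => r0 r1.
have rk0 : 0 < rho ^+ k by rewrite exprn_gt0.
have rk1 : rho ^+ k < 1 by rewrite exprn_ilt1 ?ltW // -lt0n.
have kp : 0 < k%:R :> R by rewrite ltr0n.
set K := 3 * alpha * k%:R in m0 *.
have K0 : 0 <= K by rewrite /K !mulr_ge0 // ltW.
set M := rho ^+ k / (2 - rho ^+ k) in m0 b0 *.
set c0 := C_0 rho k in l0 m0 *.
set d := (rho ^+ k - M - K * c0) / (2 * (K + 1)).
have d0 : 0 < d by rewrite /d divr_gt0 //; lra.
have Kd : (K + 1) * d = (rho ^+ k - M - K * c0) / 2 by rewrite /d; field; lra.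
exists c0, (c0 + d); split.
- rewrite /c0 /C_0 ler_pdivlMr ?mul1r; lra.
- lra.
- by rewrite lexx /=; lra.
- move=> C hC.
  apply: (key (p0 := p0poly rho k) (p1 := p0poly rho k) (c0 := c0) (c1 := c0 + d) (m0 := M) (m1 := M)) => //.
  + exact: ltW.
  + by rewrite l0 lexx.
  + by rewrite l0; lra.
  + have : K * d <= (K + 1) * d by lra.
    rewrite -/K; lra.
Qed.

End Helpers.

Section Helpers2.
Set Implicit Arguments. Unset Strict Implicit.
Lemma cheb_rec (R : realType) (y : R) n :
  (cheb R n.+2).[y] = 2 * y * (cheb R n.+1).[y] - (cheb R n).[y].
Proof. by rewrite /= !hornerE. Qed.

Lemma chebSS (R : realType) n : cheb R n.+2 = 2%:P * 'X * cheb R n.+1 - cheb R n.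
Proof. by []. Qed.

Lemma size_cheb (R : realType) n : (size (cheb R n) <= n.+1)%N.
Proof.
suff : (size (cheb R n) <= n.+1)%N /\ (size (cheb R n.+1) <= n.+2)%N by case.
elim: n => [|n [IH0 IH]].
  by rewrite /= size_polyC size_polyX; split => //; case: (_ != _).
split => //; rewrite chebSS.
apply: leq_trans (size_polyD _ _) _; rewrite geq_max size_polyN.
apply/andP; split; last by apply: leq_trans IH0 _; lia.
rewrite -mulrA mul_polyC; apply: leq_trans (size_scale_leq _ _) _.
apply: leq_trans (size_mul_leq _ _) _; rewrite size_polyX.
lia.
Qed.

Lemma cheb_closed (R : realType) (t u : R) n : t * u = 1 ->
  (cheb R n).[(t + u) / 2] = (t ^+ n + u ^+ n) / 2.
Proof.
move=> tu.
suff : (cheb R n).[(t + u) / 2] = (t ^+ n + u ^+ n) / 2 /\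
       (cheb R n.+1).[(t + u) / 2] = (t ^+ n.+1 + u ^+ n.+1) / 2 by case.
elim: n => [|n [IH1 IH2]].
  by rewrite /= !hornerE !expr0 !expr1; split => //; field.
split => //; rewrite cheb_rec IH1 IH2 !exprS.
have -> : t * (t * t ^+ n) + u * (u * u ^+ n) =
   (t + u) * (t * t ^+ n + u * u ^+ n) - (t * u) * (t ^+ n + u ^+ n) by ring.
by rewrite tu; field.
Qed.

Lemma cheb_pm1 (R : realType) (y : R) n : y ^+ 2 = 1 -> (cheb R n).[y] = y ^+ n.
Proof.
move=> y2.
suff : (cheb R n).[y] = y ^+ n /\ (cheb R n.+1).[y] = y ^+ n.+1 by case.
elim: n => [|n [IH1 IH2]]; first by rewrite /= !hornerE expr0 expr1.
split => //; rewrite cheb_rec IH1 IH2 !exprS.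
have -> : y * (y * y ^+ n) = (y ^+ 2) * y ^+ n by rewrite expr2 mulrA.
have -> : 2 * y * (y * y ^+ n) = 2 * (y ^+ 2) * y ^+ n by ring.
by rewrite !y2; ring.
Qed.

Lemma cheb_inv (R : realType) (y : R) n :
  (cheb R n.+1).[y] ^+ 2 - 2 * y * (cheb R n.+1).[y] * (cheb R n).[y]
   + (cheb R n).[y] ^+ 2 = 1 - y ^+ 2.
Proof.
elim: n => [|n IH]; first by rewrite /= !hornerE; ring.
rewrite cheb_rec -IH; ring.
Qed.

Lemma cheb_bound (R : realType) (y : R) n : -1 <= y <= 1 -> `|(cheb R n).[y]| <= 1.
Proof.
move=> hy.
have [e|ne] := eqVneq (y ^+ 2) 1.
  rewrite cheb_pm1 // normrX.
  have -> : `|y| = 1.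
    have : `|y| ^+ 2 = 1 by rewrite -normrX e normr1.
    by move/eqP; rewrite sqrf_eq1 => /orP[/eqP //|/eqP h]; have := normr_ge0 y; rewrite h; lra.
  by rewrite expr1n.
have y2 : y ^+ 2 < 1.
  rewrite lt_neqAle ne /=; rewrite expr2; nra.
have := cheb_inv y n.
set u := (cheb R n.+1).[y]; set v := (cheb R n).[y] => h.
have hv : (1 - y ^+ 2) * (1 - v ^+ 2) = (u - y * v) ^+ 2.
  have -> : (u - y * v) ^+ 2 = (u ^+ 2 - 2 * y * u * v + v ^+ 2) - v ^+ 2 * (1 - y ^+ 2) by ring.
  rewrite h; ring.
have : 0 <= 1 - v ^+ 2.
  have : 0 <= (1 - y ^+ 2) * (1 - v ^+ 2) by rewrite hv sqr_ge0.
  rewrite pmulr_rge0 //; lra.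
rewrite ler_norml expr2; nra.
Qed.

Fixpoint sp (R : realType) (n : nat) : {poly R} :=
  match n with
  | 0 => 1
  | 1 => 'X
  | (m.+1 as n').+1 => 2%:P * 'X * sp R n' + sp R m
  end.

Lemma spSS (R : realType) n : sp R n.+2 = 2%:P * 'X * sp R n.+1 + sp R n.
Proof. by []. Qed.

Lemma coef2X (R : realType) (q : {poly R}) j :
  (2%:P * 'X * q)`_j = if j is j'.+1 then 2 * q`_j' else 0.
Proof. by rewrite -mulrA coefCM coefXM; case: j => [|j] /=; rewrite ?mulr0. Qed.

Lemma sp_ge0 (R : realType) n j : 0 <= (sp R n)`_j.
Proof.
suff : (forall j, 0 <= (sp R n)`_j) /\ (forall j, 0 <= (sp R n.+1)`_j) by case.
elim: n {j} => [|n [IH0 IH]].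
  split => i; first by rewrite /= coef1; case: (i == 0)%N.
  by rewrite /= coefX; case: (i == 1)%N.
split => // i; rewrite spSS coefD coef2X.
case: i => [|i]; first by rewrite add0r.
by rewrite addr_ge0 // mulr_ge0.
Qed.

Definition sgn (R : realType) n j : R := (-1) ^+ ((n + 3 * j)./2).

Lemma half2 m : (m.+2)./2 = (m./2).+1.
Proof. by []. Qed.

Lemma cheb_coef (R : realType) n j : (cheb R n)`_j = sgn R n j * (sp R n)`_j.
Proof.
suff : (forall j, (cheb R n)`_j = sgn R n j * (sp R n)`_j) /\
       (forall j, (cheb R n.+1)`_j = sgn R n.+1 j * (sp R n.+1)`_j) by case.
elim: n {j} => [|n [IH0 IH]].
  split => i.
    by case: i => [|i]; rewrite /= coef1 /sgn //= ?expr0 ?mulr1 ?mulr0.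
  by case: i => [|[|i]]; rewrite /= coefX /sgn //= ?expr0 ?mulr1 ?mulr0 // sqrrN expr1n.
split => // i; rewrite chebSS spSS coefB coefD !coef2X.
case: i => [|i].
  rewrite IH0 /sgn !add0r !muln0 !addn0 half2 exprS; ring.
rewrite IH IH0 /sgn.
set m := (n + 1 + 3 * i)%N.
have -> : (n.+1 + 3 * i = m)%N by rewrite /m; lia.
have -> : (n + 3 * i.+1 = m.+2)%N by rewrite /m; lia.
have -> : (n.+2 + 3 * i.+1 = m.+4)%N by rewrite /m; lia.
rewrite !half2 !exprS; ring.
Qed.

Lemma sp_rec (R : realType) (y : R) n :
  (sp R n.+2).[y] = 2 * y * (sp R n.+1).[y] + (sp R n).[y].
Proof. by rewrite spSS !hornerE. Qed.

Lemma sp_closed (R : realType) (t u : R) n : t * u = -1 ->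
  (sp R n).[(t + u) / 2] = (t ^+ n + u ^+ n) / 2.
Proof.
move=> tu.
suff : (sp R n).[(t + u) / 2] = (t ^+ n + u ^+ n) / 2 /\
       (sp R n.+1).[(t + u) / 2] = (t ^+ n.+1 + u ^+ n.+1) / 2 by case.
elim: n => [|n [IH1 IH2]].
  by rewrite /= !hornerE !expr0 !expr1; split => //; field.
split => //; rewrite sp_rec IH1 IH2 !exprS.
have -> : t * (t * t ^+ n) + u * (u * u ^+ n) =
   (t + u) * (t * t ^+ n + u * u ^+ n) - (t * u) * (t ^+ n + u ^+ n) by ring.
by rewrite tu; field.
Qed.

Lemma size_sp (R : realType) n : (size (sp R n) <= n.+1)%N.
Proof.
suff : (size (sp R n) <= n.+1)%N /\ (size (sp R n.+1) <= n.+2)%N by case.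
elim: n => [|n [IH0 IH]].
  by rewrite /= size_polyC size_polyX; split => //; case: (_ != _).
split => //; rewrite spSS.
apply: leq_trans (size_polyD _ _) _; rewrite geq_max.
apply/andP; split; last by apply: leq_trans IH0 _; lia.
rewrite -mulrA mul_polyC; apply: leq_trans (size_scale_leq _ _) _.
apply: leq_trans (size_mul_leq _ _) _; rewrite size_polyX.
lia.
Qed.

Lemma rho_formula (R : realType) (b : R) k : 0 < b ->
  2 * b ^+ k / (1 + b ^+ (2 * k)) = ((b ^+ k + b^-1 ^+ k) / 2)^-1.
Proof.
move=> b0; have bk : 0 < b ^+ k by rewrite exprn_gt0.
rewrite mulnC exprM exprVn; field.
by rewrite (gt_eqF bk) gt_eqF //; nra.
Qed.

Lemma hyp_ok (R : realType) (alpha c m r A : R) k : 0 <= alpha -> 0 <= c -> (0 < k)%N ->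
  alpha < Num.min A ((r - m) / (3 * k%:R * c)) ->
  m + 3 * alpha * k%:R * c < r.
Proof.
move=> a0 c0 k0; rewrite lt_min => /andP[_].
have kp : 0 < k%:R :> R by rewrite ltr0n.
have [->|cn] := eqVneq c 0; first by rewrite mulr0 invr0 mulr0; lra.
have cp : 0 < c by rewrite lt_neqAle eq_sym cn.
rewrite ltr_pdivlMr; last by rewrite !mulr_gt0.
lra.
Qed.

Definition T1 (R : realType) (rho : R) k := (cheb R k).[rho^-1].
Definition p1poly (R : realType) (rho : R) k : {poly R} :=
  (T1 rho k)^-1 *: \poly_(j < k.+1) ((cheb R k)`_j * rho^-1 ^+ j).

Lemma p1_eval (R : realType) (rho : R) k x :
  (p1poly rho k).[x] = (T1 rho k)^-1 * (cheb R k).[x * rho^-1].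
Proof.
rewrite /p1poly hornerZ (horner_coef_wide _ (size_poly _ _)).
rewrite (horner_coef_wide _ (size_cheb R k)); congr (_ * _).
apply: eq_bigr => i _; rewrite coef_poly ltn_ord exprMn; ring.
Qed.

Lemma p1_l1 (R : realType) (rho : R) k : 0 < rho -> 0 < T1 rho k ->
  l1norm (p1poly rho k) = (T1 rho k)^-1 * (sp R k).[rho^-1].
Proof.
move=> r0 t0.
have sp1 : (size (p1poly rho k) <= k.+1)%N.
  exact: leq_trans (size_scale_leq _ _) (size_poly _ _).
rewrite (l1normE sp1) (horner_coef_wide _ (size_sp R k)) mulr_sumr.
apply: eq_bigr => i _; rewrite /p1poly coefZ coef_poly ltn_ord cheb_coef.
rewrite !normrM /sgn normrX normrN1 expr1n mul1r.
rewrite (ger0_norm (sp_ge0 _ _ _)) ger0_norm ?invr_ge0 ?ltW //.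
by rewrite ger0_norm // exprn_ge0 // invr_ge0 ltW.
Qed.

Lemma p1_props (R : realType) (rho : R) k : 0 < rho < 1 -> (0 < k)%N ->
  [/\ (size (p1poly rho k) <= k.+1)%N, (p1poly rho k).[1] = 1,
      l1norm (p1poly rho k) = C_1 rho k &
      forall x : R, 0 <= x <= rho -> `|(p1poly rho k).[x]| <= rho_1 rho k].
Proof.
move=> /andP[r0 r1] k0.
set a := Num.sqrt (1 + rho); set b := Num.sqrt (1 - rho).
have a2 : a ^+ 2 = 1 + rho by rewrite sqr_sqrtr //; lra.
have b2 : b ^+ 2 = 1 - rho by rewrite sqr_sqrtr //; lra.
have a0 : 0 <= a by apply: sqrtr_ge0.
have b0 : 0 <= b by apply: sqrtr_ge0.
have ab : b < a by rewrite /a /b ltr_sqrt; lra.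
have be0 : 0 < beta_rho rho by rewrite /beta_rho -/a -/b divr_gt0; lra.
have bsum : (beta_rho rho + (beta_rho rho)^-1) / 2 = rho^-1.
  rewrite /beta_rho -/a -/b invf_div.
  have -> : (a - b) / (a + b) + (a + b) / (a - b) = 2 * (a ^+ 2 + b ^+ 2) / (a ^+ 2 - b ^+ 2).
    by field; rewrite !gt_eqF //; nra.
  rewrite a2 b2; field; lra.
have eT : T1 rho k = ((beta_rho rho) ^+ k + (beta_rho rho)^-1 ^+ k) / 2.
  by rewrite /T1 -bsum cheb_closed // mulfV // gt_eqF.
have Tp : 0 < T1 rho k.
  by rewrite eT divr_gt0 // addr_gt0 // exprn_gt0 // invr_gt0.
have eR : rho_1 rho k = (T1 rho k)^-1 by rewrite eT /rho_1 rho_formula.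
split.
- exact: leq_trans (size_scale_leq _ _) (size_poly _ _).
- by rewrite p1_eval mul1r mulVf // gt_eqF.
- rewrite p1_l1 // /C_1 eR.
  set s := Num.sqrt (1 + rho ^+ 2).
  have s2 : s ^+ 2 = 1 + rho ^+ 2 by rewrite sqr_sqrtr //; nra.
  have -> : rho^-1 = ((1 + s) / rho + (1 - s) / rho) / 2 by field; lra.
  rewrite sp_closed; last first.
    have -> : (1 + s) / rho * ((1 - s) / rho) = (1 - s ^+ 2) / rho ^+ 2 by field; lra.
    rewrite s2; field; lra.
  rewrite !expr_div_n; field.
  by rewrite (gt_eqF Tp) gt_eqF // exprn_gt0.
- move=> x /andP[x0 xr].
  have Ti : 0 <= (T1 rho k)^-1 by rewrite invr_ge0 ltW.
  rewrite p1_eval eR normrM (ger0_norm Ti).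
  rewrite -[X in _ <= X]mulr1 ler_wpM2l //.
  have ri : 0 < rho^-1 by rewrite invr_gt0.
  apply: cheb_bound; apply/andP; split.
    have : 0 <= x * rho^-1 by rewrite mulr_ge0 // ltW.
    lra.
  have rn : rho != 0 by rewrite gt_eqF.
  by rewrite -(mulfV rn) ler_wpM2r // ltW.
Qed.

Lemma pstar_props (R : realType) (rho : R) k : 0 < rho < 1 -> (0 < k)%N ->
  [/\ (size (p_star rho k) <= k.+1)%N, (p_star rho k).[1] = 1 &
      forall x : R, 0 <= x <= rho -> `|(p_star rho k).[x]| <= rho_star rho k].
Proof.
move=> /andP[r0 r1] k0.
set s := Num.sqrt (1 - rho).
have s2 : s ^+ 2 = 1 - rho by rewrite sqr_sqrtr //; lra.
have s0 : 0 <= s by apply: sqrtr_ge0.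
have s1 : s < 1 by rewrite /s; have := @ltr_sqrt R (1 - rho) 1 ltr01; rewrite sqrtr1 => ->; lra.
have be0 : 0 < beta rho by rewrite /beta -/s divr_gt0; lra.
have bsum : (beta rho + (beta rho)^-1) / 2 = (2 - rho) / rho.
  rewrite /beta -/s invf_div.
  have -> : (1 - s) / (1 + s) + (1 + s) / (1 - s) = 2 * (1 + s ^+ 2) / (1 - s ^+ 2).
    by field; rewrite !gt_eqF //; lra.
  rewrite s2; field; lra.
set T := (cheb R k).[(2 - rho) / rho].
have eT : T = ((beta rho) ^+ k + (beta rho)^-1 ^+ k) / 2.
  by rewrite /T -bsum cheb_closed // mulfV // gt_eqF.
have Tp : 0 < T.
  by rewrite eT divr_gt0 // addr_gt0 // exprn_gt0 // invr_gt0.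
have eR : rho_star rho k = T^-1 by rewrite eT /rho_star rho_formula.
have ev : forall x, (p_star rho k).[x] = T^-1 * (cheb R k).[2 / rho * x - 1].
  by move=> x; rewrite /p_star hornerZ horner_comp !hornerE -/T (ger0_norm (ltW Tp)).
split.
- apply: leq_trans (size_scale_leq _ _) _.
  apply: leq_trans (size_comp_poly_leq _ _) _.
  have h1 : ((size (cheb R k)).-1 <= k)%N by have := size_cheb R k; lia.
  set q : {poly R} := (2 / rho) *: 'X - 1.
  have h2 : ((size q).-1 <= 1)%N.
    have : (size q <= 2)%N.
      apply: leq_trans (size_polyD _ _) _; rewrite geq_max size_polyN size_poly1 andbT.
      by apply: leq_trans (size_scale_leq _ _) _; rewrite size_polyX.
    lia.
  have := leq_mul h1 h2; rewrite muln1; lia.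
- rewrite ev mulr1.
  have -> : 2 / rho - 1 = (2 - rho) / rho by field; lra.
  by rewrite -/T mulVf // gt_eqF.
- move=> x /andP[x0 xr].
  have Ti : 0 <= T^-1 by rewrite invr_ge0 ltW.
  rewrite ev eR normrM (ger0_norm Ti).
  rewrite -[X in _ <= X]mulr1 ler_wpM2l //.
  have ri : 0 < rho^-1 by rewrite invr_gt0.
  have rn : rho != 0 by rewrite gt_eqF.
  have h : x / rho <= 1 by rewrite -(mulfV rn) ler_wpM2r // ltW.
  have h' : 0 <= x / rho by rewrite mulr_ge0 // ltW.
  apply: cheb_bound; rewrite mulrAC; apply/andP; split; lra.
Qed.

End Helpers2.

Lemma l1norm_ge0 (R : realType) (p : {poly R}) : 0 <= l1norm p.
Proof. by rewrite /l1norm sumr_ge0 // => i _; apply: normr_ge0. Qed.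

Theorem proposition7 (R : realType) (rho alpha : R) (k : nat) :
  0 < rho < 1 -> 0 <= alpha -> (2 < k)%N ->
  [/\
   (* (i) *)
   alpha < alpha_0 rho k ->
     exists a b : R, [/\ 1 <= a, a < b, a <= C_0 rho k <= b &
       forall C, a <= C <= b -> rho_hat rho alpha k C < rho ^+ k],
   (* (ii) *)
   alpha < Num.min (alpha_0 rho k) ((rho ^+ k - rho_1 rho k) / (3 * k%:R * C_1 rho k)) ->
     forall C, C_0 rho k <= C <= C_1 rho k -> rho_hat rho alpha k C < rho ^+ k
  &
   (* (iii) *)
   alpha < Num.min (alpha_0 rho k) ((rho ^+ k - rho_star rho k) / (3 * k%:R * C_star rho k)) ->
     forall C, C_0 rho k <= C <= C_star rho k -> rho_hat rho alpha k C < rho ^+ k].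
Proof.
move=> hr a0 k2.
have k0 : (0 < k)%N by apply: leq_trans k2.
have r0 : 0 <= rho by case/andP: hr => /ltW.
have [s0 e0 l0 b0] := p0_props hr k0.
split.
- exact: part1.
- move=> h C hC.
  have ha : alpha < alpha_0 rho k by move: h; rewrite lt_min => /andP[].
  have m0 := m0_ok hr a0 k0 ha.
  have [s1 e1 l1 b1] := p1_props hr k0.
  have c1 : 0 <= C_1 rho k by rewrite -l1 l1norm_ge0.
  have m1 := hyp_ok a0 c1 k0 h.
  apply: (key (p0 := p0poly rho k) (p1 := p1poly rho k)) m0 m1 hC => //.
  + by rewrite l0.
  + by rewrite l1.
- move=> h C hC.
  have ha : alpha < alpha_0 rho k by move: h; rewrite lt_min => /andP[].
  have m0 := m0_ok hr a0 k0 ha.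
  have [s1 e1 b1] := pstar_props hr k0.
  have c1 : 0 <= C_star rho k by apply: l1norm_ge0.
  have m1 := hyp_ok a0 c1 k0 h.
  apply: (key (p0 := p0poly rho k) (p1 := p_star rho k)) m0 m1 hC => //.
  by rewrite l0.
Qed.
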